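(* Let $\mathcal{C}$ be a $q$-ary cyclic code of length $n$ and minimum distance $d$, and let $\mathcal{L}$ be a $q_\ell$-ary cyclic code of length $n_\ell$, dimension $k_\ell$ and minimum distance $d_\ell$, where $\mathbb{F}_{q_\ell}=\mathbb{F}_{q^u}$ is an extension field of $\mathbb{F}_q$ and $\gcd(n,n_\ell)=1$. Suppose that $\mathcal{L}$ is a non-zero-locator code of $\mathcal{C}$ (as defined in the context) with associated integers $\mu\ge 2$ and $e$. Then $$d \;\ge\; d^{\ast}:=\left\lceil \frac{\mu}{d_\ell}\right\rceil .$$
   Context: A $q$-ary cyclic code $\mathcal{C}$ of length $n$ (with $\gcd(n,q)=1$, so $x^n-1$ has $n$ distinct roots) is an ideal of $\mathbb{F}_q[x]/(x^n-1)$; codewords $c=(c_0,\dots,c_{n-1})$ are identified with polynomials $c(x)=\sum_{i=0}^{n-1}c_ix^i$. Non-zero-locator code: let $\mathcal{C}$ be a $q$-ary cyclic code of length $n$ and $\mathcal{L}$ a cyclic code of length $n_\ell$ over $\mathbb{F}_{q_\ell}=\mathbb{F}_{q^u}$ (with $\gcd(n_\ell,q)=1$), with $\gcd(n,n_\ell)=1$. Let $\alpha$ be an element of multiplicative order $n$ and $\beta$ an element of multiplicative order $n_\ell$, both lying in a common finite extension field of $\mathbb{F}_q$ (e.g. $\alpha$ in $\mathbb{F}_{q^s}$, $\beta$ in $\mathbb{F}_{q_\ell^{s_\ell}}$, both contained in $\mathbb{F}_{q^r}$ with $r=\mathrm{lcm}(s,u s_\ell)$). Then $\mathcal{L}$ is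 called a non-zero-locator code of $\mathcal{C}$ if there exist an integer $\mu\ge 2$ and an integer $e$ such that for all $a(x)\in\mathcal{L}$ and all $c(x)\in\mathcal{C}$, $$\sum_{j=0}^{\infty} c(\alpha^{j+e})\,a(\beta^j)\,x^j \equiv 0 \pmod{x^{\mu-1}}$$ as formal power series, i.e. $c(\alpha^{j+e})a(\beta^j)=0$ for $j=0,\dots,\mu-2$. *)

(* Defs.v *)
From HB Require Import structures.
From mathcomp Require Import all_boot all_order all_algebra.
Set Implicit Arguments. Unset Strict Implicit. Unset Printing Implicit Defensive.
Import Order.TTheory GRing.Theory Num.Theory.
Local Open Scope ring_scope.

(* Words of length n over R are row vectors 'rV[R]_n, identified with the
   polynomial c(x) = \sum_{i<n} c_i x^i. *)
Definition word_poly (R : nzRingType) (n : nat) (c : 'rV[R]_n) : {poly R} :=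
  \sum_(i < n) c 0 i *: 'X^i.

Definition poly_word (R : nzRingType) (n : nat) (p : {poly R}) : 'rV[R]_n :=
  \row_(i < n) p`_i.

(* C is a cyclic code of length n: an ideal of R[x]/(x^n - 1), i.e. it contains 0,
   is closed under addition, and under multiplication by any polynomial
   modulo x^n - 1. *)
Definition is_cyclic_code (R : finFieldType) (n : nat) (C : {set 'rV[R]_n}) : Prop :=
  [/\ (0 : 'rV[R]_n) \in C,
      (forall c1 c2, c1 \in C -> c2 \in C -> c1 + c2 \in C) &
      (forall c (p : {poly R}), c \in C ->
          poly_word n ((p * word_poly c) %% ('X^n - 1)) \in C)].

Definition wt (R : finFieldType) (n : nat) (c : 'rV[R]_n) : nat :=
  #|[set i : 'I_n | c 0 i != 0]|.

(* d is the minimum distance of the (linear) code C: the minimum Hamming weight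
   of a nonzero codeword (for linear codes this equals the minimum distance). *)
Definition min_dist (R : finFieldType) (n : nat) (C : {set 'rV[R]_n}) (d : nat) : Prop :=
  (exists2 c, c \in C & (c != 0) && (wt c == d)) /\
  (forall c, c \in C -> c != 0 -> (d <= wt c)%N).

Definition word_eval (F K : fieldType) (f : {rmorphism F -> K}) (n : nat)
    (c : 'rV[F]_n) (x : K) : K :=
  (map_poly f (word_poly c)).[x].

Definition nonzero_locator (F Fl : finFieldType) (K : fieldType)
    (iota : {rmorphism F -> K}) (kappa : {rmorphism Fl -> K})
    (n nl : nat) (C : {set 'rV[F]_n}) (L : {set 'rV[Fl]_nl})
    (alpha beta : K) (mu : nat) (e : int) : Prop :=
  (2 <= mu)%N /\
  forall a c, a \in L -> c \in C -> forall j : nat, (j <= mu - 2)%N ->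
    word_eval iota c (alpha ^ (j%:Z + e)) * word_eval kappa a (beta ^+ j) = 0.

(* Main.v *)
Require Import Defs.
From HB Require Import structures.
From mathcomp Require Import all_boot all_order all_algebra.
From mathcomp Require Import ring zify.
Import Order.TTheory GRing.Theory Num.Theory.
Local Open Scope ring_scope.

Lemma vander (K : fieldType) (I : finType) (b z : I -> K) (N : nat) :
  (forall p q, b p != 0 -> b q != 0 -> z p = z q -> p = q) ->
  (forall j, (j < N)%N -> \sum_p b p * z p ^+ j = 0) ->
  (#|[set p | b p != 0%R]| <= N)%N -> forall p, b p = 0.
Proof.
move=> zi hs hN p0; apply/eqP/negPn/negP => bp0.
set S := [set p | b p != 0].
set S' := S :\ p0.
pose P := \prod_(x <- map z (enum S')) ('X - x%:P).
have szP : size P = #|S|.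
  rewrite size_prod_XsubC size_map -cardE (cardsD1 p0 S) inE bp0; done.
have E1 : \sum_p b p * P.[z p] = 0.
  under eq_bigr do rewrite horner_coef mulr_sumr.
  rewrite exchange_big /= big1 // => j _.
  under eq_bigr do rewrite mulrCA.
  rewrite -mulr_sumr hs ?mulr0 //.
  by apply: leq_trans hN; rewrite -szP.
have E2 : \sum_p b p * P.[z p] = b p0 * P.[z p0].
  rewrite (bigD1 p0) //= big1 ?addr0 // => p pp0.
  have [->|bp] := eqVneq (b p) 0; first by rewrite mul0r.
  apply/eqP; rewrite mulf_eq0; apply/orP; right.
  rewrite -/(root P (z p)) root_prod_XsubC; apply: map_f.
  by rewrite mem_enum !inE pp0.
have : b p0 * P.[z p0] != 0.
  rewrite mulf_neq0 // -/(root P (z p0)) root_prod_XsubC.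
  apply/mapP => -[q]; rewrite mem_enum !inE => /andP[qp0 bq] zq.
  by move: qp0; rewrite (zi _ _ bp0 bq zq) eqxx.
by rewrite -E2 E1 eqxx.
Qed.

Lemma weval (F K : fieldType) (f : {rmorphism F -> K}) (n : nat)
    (c : 'rV[F]_n) (x : K) :
  word_eval f c x = \sum_(i < n) f (c 0 i) * x ^+ i.
Proof.
rewrite /word_eval /word_poly raddf_sum horner_sum; apply: eq_bigr => i _.
rewrite [X in X.[x]](_ : _ = f (c 0 i) *: 'X^i); first by rewrite hornerZ hornerXn.
by rewrite -(map_polyXn f) -map_polyZ.
Qed.

Lemma modinj (n nl x y : nat) : (x < n)%N -> (y < n)%N -> coprime n nl ->
  (x * nl = y * nl %[mod n])%N -> x = y.
Proof.
move=> xn yn cop Hm.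
wlog le : x y xn yn Hm / (x <= y)%N.
  move=> W; case: (leqP x y) => h; first exact: W.
  by apply/esym/W => //; exact: ltnW.
have : (n %| (y - x) * nl)%N.
  by rewrite mulnBl -eqn_mod_dvd ?leq_mul2r ?le ?orbT // Hm.
rewrite Gauss_dvdl // => /dvdnP [m Hm'].
have lt : (y - x < n)%N by apply: leq_ltn_trans (leq_subr _ _) _.
case: m Hm' lt => [|m] Hm'; first by move: Hm'; rewrite mul0n; lia.
by rewrite Hm' mulSn; lia.
Qed.

Arguments modinj {n nl x y}.

Lemma prim_inj (K : fieldType) (n nl : nat) (alpha beta : K) :
  (0 < n)%N -> (0 < nl)%N -> coprime n nl ->
  n.-primitive_root alpha -> nl.-primitive_root beta ->
  forall (i i' : 'I_n) (k k' : 'I_nl),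
  alpha ^+ i * beta ^+ k = alpha ^+ i' * beta ^+ k' -> i = i' /\ k = k'.
Proof.
move=> n0 nl0 cop pa pb i i' k k' E.
have a0 : alpha != 0.
  apply/eqP => a0; move: (prim_expr_order pa); rewrite a0 expr0n.
  by rewrite eqn0Ngt n0 /= => /esym/eqP; rewrite oner_eq0.
have b0 : beta != 0.
  apply/eqP => b0; move: (prim_expr_order pb); rewrite b0 expr0n.
  by rewrite eqn0Ngt nl0 /= => /esym/eqP; rewrite oner_eq0.
have Ei : alpha ^+ (i * nl) = alpha ^+ (i' * nl).
  move: (congr1 (fun x => x ^+ nl) E).
  by rewrite /= !exprMn -!exprM (mulnC k nl) (mulnC k' nl) !exprM (prim_expr_order pb) !expr1n !mulr1.
have ii : i = i'.
  apply: ord_inj; move/eqP: Ei; rewrite (eq_prim_root_expr pa) => /eqP Hm.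
  exact: (modinj (ltn_ord i) (ltn_ord i') cop Hm).
subst i'; split => //.
move/mulfI: E => /(_ (expf_neq0 _ a0)) /eqP.
rewrite (eq_prim_root_expr pb) !modn_small // => /eqP; exact: val_inj.
Qed.

Arguments prim_inj {K n nl alpha beta}.

Theorem theorem2
  (Fq Fql K : finFieldType)
  (emb : {rmorphism Fq -> Fql})   (* F_{q_l} = F_{q^u} is an extension of F_q *)
  (kappa : {rmorphism Fql -> K})  (* common extension field F_{q^r} *)
  (n nl d dl : nat)
  (C : {set 'rV[Fq]_n}) (L : {set 'rV[Fql]_nl})
  (alpha beta : K) (mu : nat) (e : int) :
  (0 < n)%N -> (0 < nl)%N ->
  coprime n #|Fq| -> coprime nl #|Fq| -> coprime n nl ->
  is_cyclic_code C -> min_dist C d ->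
  is_cyclic_code L ->
  min_dist L dl ->
  n.-primitive_root alpha -> nl.-primitive_root beta ->
  nonzero_locator (kappa \o emb) kappa C L alpha beta mu e ->
  Num.ceil ((mu%:R : rat) / (dl%:R : rat)) <= d%:Z.
Proof.
move=> n0 nl0 _ _ cop _ [[c cC /andP[c0 /eqP wc]] _] _ [[a aL /andP[a0 /eqP wa]] _] pa pb [mu2 nzl].
have a0' : alpha != 0.
  apply/eqP => a0'; move: (prim_expr_order pa); rewrite a0' expr0n.
  by rewrite eqn0Ngt n0 /= => /esym/eqP; rewrite oner_eq0.
pose f := kappa \o emb.
pose b (p : 'I_n * 'I_nl) := f (c 0 p.1) * kappa (a 0 p.2) * (alpha ^ e) ^+ p.1.
pose z (p : 'I_n * 'I_nl) := alpha ^+ p.1 * beta ^+ p.2.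
have bE p : (b p != 0) = (c 0 p.1 != 0) && (a 0 p.2 != 0).
  rewrite /b !mulf_eq0 negb_or expf_eq0 (negbTE (expfz_neq0 _ a0')) andbF andbT.
  by rewrite negb_or /f /= !fmorph_eq0.
have card : #|[set p | b p != 0%R]| = (d * dl)%N.
  rewrite -wc -wa /wt -cardsX; apply: eq_card => p.
  by rewrite !inE bE; case: p.
have [i ci] : exists i, c 0 i != 0.
  case: (pickP (fun i => c 0 i != 0)) => [i ci|h]; first by exists i.
  by case/eqP: c0; apply/rowP => i; rewrite !mxE; move/negbFE/eqP: (h i).
have [k ak] : exists k, a 0 k != 0.
  case: (pickP (fun k => a 0 k != 0)) => [k1 ak|h]; first by exists k1.
  by case/eqP: a0; apply/rowP => k1; rewrite !mxE; move/negbFE/eqP: (h k1).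
have hs j : (j < mu.-1)%N -> \sum_p b p * z p ^+ j = 0.
  move=> jl; have := nzl a c aL cC j ltac:(lia).
  rewrite !weval big_distrl /=.
  under eq_bigr do rewrite big_distrr /=.
  rewrite pair_bigA /= => H; rewrite -[RHS]H; apply: eq_bigr => -[i1 k1] _ /=.
  rewrite expfzDr // -exprnP /b /z /f /= exprMn -!exprM mulnC exprM.
  rewrite exprMn -!exprM (mulnC k1 j); ring.
have lemu : (mu <= d * dl)%N.
  rewrite leqNgt; apply/negP => lt.
  have zi : forall p q, b p != 0 -> b q != 0 -> z p = z q -> p = q.
    move=> [p1 p2] [q1 q2] _ _; rewrite /z /= => /(prim_inj n0 nl0 cop pa pb).
    by case=> -> ->.
  have hN : (#|[set p | b p != 0%R]| <= mu.-1)%N by rewrite card; lia.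
  have := @vander _ _ b z mu.-1 zi hs hN (i, k).
  by move/eqP; rewrite -[_ == 0]negbK bE ci ak.
have dl0 : (0 < dl)%N.
  rewrite -wa /wt card_gt0; apply/set0Pn; exists k; by rewrite inE.
rewrite ceil_le_int ler_pdivrMr ?ltr0n // -[d%:Z%:~R]/(d%:R : rat) -natrM ler_nat.
exact: lemu.
Qed.
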